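(* Let $\alpha\ge 0$, $\mu\ge 0$, $n\in\mathbb{N}=\{1,2,\dots\}$ and $x\in[0,\infty)$. Then (i) $T_n(1;x)=1$; (ii) $T_n(t;x)=x+\dfrac{2\alpha x^2}{n}$; (iii) $T_n(t^2;x)=x^2+\dfrac{4\alpha}{n^2}x^2+\dfrac{4\alpha}{n}x^3+\dfrac{4\alpha^2}{n^2}x^4+\dfrac{x}{n}+\dfrac{2\mu x}{n}\dfrac{e_\mu(-nx)}{e_\mu(nx)}$, where $T_n(f;x)$ denotes the operator applied to the function $t\mapsto f(t)$.
   Context: For $\mu>-\tfrac12$ define $\gamma_\mu(2k)=\dfrac{2^{2k}k!\,\Gamma(k+\mu+1/2)}{\Gamma(\mu+1/2)}$ and $\gamma_\mu(2k+1)=\dfrac{2^{2k+1}k!\,\Gamma(k+\mu+3/2)}{\Gamma(\mu+1/2)}$, $k\ge0$; $e_\mu(x)=\sum_{k\ge0} x^k/\gamma_\mu(k)$; $\theta_k=0$ if $k$ is even and $\theta_k=1$ if $k$ is odd. Let $h_k^\mu(\xi,\alpha)=\gamma_\mu(k)\sum_{j=0}^{\lfloor k/2\rfloor}\dfrac{\alpha^j\xi^{k-2j}}{j!\,\gamma_\mu(k-2j)}$ (so $\sum_k h_k^\mu(\xi,\alpha)t^k/\gamma_\mu(k)=e^{\alpha t^2}e_\mu(\xi t)$). For $\alpha\ge0,\mu\ge0$, $n\in\mathbb{N}$ and $x\in[0,\infty)$ define $$T_n(f;x)=\frac{1}{e^{\alpha x^2}e_\mu(nx)}\sum_{k=0}^\infty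 \frac{h_k^\mu(n,\alpha)}{\gamma_\mu(k)}x^k f\!\left(\frac{k+2\mu\theta_k}{n}\right).$$ *)

(* Defs.v *)
From Stdlib Require Import Reals Lra Lia.
From Coquelicot Require Import Coquelicot.
Open Scope R_scope.

(* Rising factorial (Pochhammer symbol): poch a k = a (a+1) ... (a+k-1)
   = Gamma(a+k)/Gamma(a) for a > 0. *)
Fixpoint poch (a : R) (k : nat) : R :=
  match k with
  | O => 1
  | S k' => poch a k' * (a + INR k')
  end.

(* gamma_mu(m):  m = 2k   -> 2^{2k} k! Gamma(k+mu+1/2)/Gamma(mu+1/2)
                 m = 2k+1 -> 2^{2k+1} k! Gamma(k+mu+3/2)/Gamma(mu+1/2) *)
Definition gam (mu : R) (m : nat) : R :=
  if Nat.even m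
  then 2 ^ m * INR (Factorial.fact (Nat.div2 m)) * poch (mu + /2) (Nat.div2 m)
  else 2 ^ m * INR (Factorial.fact (Nat.div2 m)) * poch (mu + /2) (S (Nat.div2 m)).

Definition e_mu (mu x : R) : R := Series (fun k => x ^ k / gam mu k).

Definition theta (k : nat) : R := if Nat.even k then 0 else 1.

Definition h_mu (mu : R) (k : nat) (xi al : R) : R :=
  gam mu k * sum_f_R0 (fun j => al ^ j * xi ^ (k - 2 * j)
                                / (INR (Factorial.fact j) * gam mu (k - 2 * j)))
                      (Nat.div2 k).

Definition T_op (al mu : R) (n : nat) (f : R -> R) (x : R) : R :=
  / (exp (al * x ^ 2) * e_mu mu (INR n * x)) *
  Series (fun k => h_mu mu k (INR n) al / gam mu k * x ^ k
                   * f ((INR k + 2 * mu * theta k) / INR n)).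

(* Main.v *)
Require Import Defs.
From Stdlib Require Import Reals Lra Lia.
From Coquelicot Require Import Coquelicot.
Open Scope R_scope.

Lemma even_dbl q : Nat.even (2 * q) = true.
Proof. induction q; [reflexivity|]. replace (2 * S q)%nat with (S (S (2*q))) by lia. exact IHq. Qed.
Lemma even_sdbl q : Nat.even (S (2 * q)) = false.
Proof. induction q; [reflexivity|]. replace (S (2 * S q))%nat with (S (S (S (2*q)))) by lia. exact IHq. Qed.

Lemma poch_pos a k : 0 < a -> 0 < poch a k.
Proof. intros Ha; induction k; simpl; [lra|]. apply Rmult_lt_0_compat; auto. pose proof (pos_INR k); lra. Qed.

Definition cc mu m := INR m + 2 * mu * theta m.

Lemma gam_S mu m : gam mu (S m) = cc mu (S m) * gam mu m.
Proof.
  unfold gam, cc, theta. destruct (Nat.Even_or_Odd m) as [[q ->]|[q ->]].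
  - rewrite even_sdbl, even_dbl, Nat.div2_succ_double, Nat.div2_double.
    simpl poch. rewrite !S_INR, mult_INR. simpl pow. simpl (INR 2). field.
  - replace (2*q+1)%nat with (S (2*q)) by lia.
    replace (S (S (2 * q))) with (2 * S q)%nat by lia.
    rewrite even_sdbl, even_dbl, Nat.div2_succ_double, Nat.div2_double.
    replace (2 * S q)%nat with (S (S (2 * q))) by lia.
    simpl poch. rewrite fact_simpl, mult_INR, !S_INR, mult_INR. simpl pow. simpl (INR 2). ring.
Qed.

Lemma theta_01 m : theta m = 0 \/ theta m = 1.
Proof. unfold theta; destruct (Nat.even m); auto. Qed.

Lemma cc_ge mu m : 0 <= mu -> INR m <= cc mu m.
Proof. intros; unfold cc; destruct (theta_01 m) as [->| ->]; nra. Qed.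

Lemma gam_ge mu m : 0 <= mu -> INR (Factorial.fact m) <= gam mu m.
Proof.
  intros Hmu; induction m.
  - unfold gam; simpl; lra.
  - rewrite gam_S, fact_simpl, mult_INR. pose proof (cc_ge mu (S m) Hmu).
    pose proof (pos_INR (Factorial.fact m)). pose proof (pos_INR (S m)). 
    apply Rmult_le_compat; auto.
Qed.

Lemma gam_pos mu m : 0 <= mu -> 0 < gam mu m.
Proof. intros H; pose proof (gam_ge mu m H); pose proof (lt_0_INR _ (Factorial.lt_O_fact m)); lra. Qed.

Lemma theta_S m : theta (S m) = 1 - theta m.
Proof. unfold theta. rewrite Nat.even_succ, <- Nat.negb_even. destruct (Nat.even m); simpl; lra. Qed.

Lemma theta_sub k j : (2 * j <= k)%nat -> theta (k - 2 * j) = theta k.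
Proof.
  intros H. replace k with (k - 2*j + 2*j)%nat at 2 by lia. unfold theta.
  rewrite Nat.even_add, even_dbl. destruct (Nat.even (k - 2*j)); reflexivity.
Qed.

Lemma neg1_pow m : (-1) ^ m = 1 - 2 * theta m.
Proof. induction m. unfold theta; simpl; lra. rewrite theta_S; simpl; rewrite IHm; lra. Qed.

Definition sp (a : nat -> R) (i : nat) : R := if Nat.even i then a (Nat.div2 i) else 0.

Lemma sum_sparse (G : nat -> nat -> R) p :
  sum_f_R0 (fun i => if Nat.even i then G (Nat.div2 i) i else 0) p
  = sum_f_R0 (fun j => G j (2 * j)%nat) (Nat.div2 p).
Proof.
  assert (H : forall q, sum_f_R0 (fun i => if Nat.even i then G (Nat.div2 i) i else 0) (2*q)
                 = sum_f_R0 (fun j => G j (2 * j)%nat) q /\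
               sum_f_R0 (fun i => if Nat.even i then G (Nat.div2 i) i else 0) (S (2*q))
                 = sum_f_R0 (fun j => G j (2 * j)%nat) q).
  { induction q.
    - simpl. split; [reflexivity| ring].
    - destruct IHq as [H1 H2].
      replace (2 * S q)%nat with (S (S (2*q))) by lia.
      assert (E : sum_f_R0 (fun i => if Nat.even i then G (Nat.div2 i) i else 0) (S (S (2*q)))
                  = sum_f_R0 (fun j => G j (2 * j)%nat) (S q)).
      { change (sum_f_R0 (fun i => if Nat.even i then G (Nat.div2 i) i else 0) (S (2*q))
           + (if Nat.even (S (S (2*q))) then G (Nat.div2 (S (S (2*q)))) (S (S (2*q))) else 0)
           = sum_f_R0 (fun j => G j (2 * j)%nat) q + G (S q) (2 * S q)%nat).
        rewrite H2. replace (S (S (2*q))) with (2 * S q)%nat by lia.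
        rewrite even_dbl, Nat.div2_double. reflexivity. }
      split; [exact E|].
      change (sum_f_R0 (fun i => if Nat.even i then G (Nat.div2 i) i else 0) (S (S (2*q)))
           + (if Nat.even (S (S (S (2*q)))) then G (Nat.div2 (S (S (S (2*q))))) (S (S (S (2*q)))) else 0)
           = sum_f_R0 (fun j => G j (2 * j)%nat) (S q)).
      rewrite E. replace (S (S (S (2*q)))) with (S (2 * S q))%nat by lia.
      rewrite even_sdbl. ring. }
  destruct (Nat.Even_or_Odd p) as [[q ->]|[q ->]].
  - rewrite Nat.div2_double. apply H.
  - replace (2*q+1)%nat with (S (2*q)) by lia. rewrite Nat.div2_succ_double. apply H.
Qed.

Lemma div2_lim : filterlim Nat.div2 eventually eventually.
Proof.
  intros P [N HN]. exists (2 * N)%nat. intros n Hn. apply HN.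
  pose proof (Nat.div2_odd n). destruct (Nat.odd n); simpl in H; lia.
Qed.

Lemma is_series_sp a l : is_series a l -> is_series (sp a) l.
Proof.
  intros H. unfold is_series in *.
  apply filterlim_ext with (fun p => sum_n a (Nat.div2 p)).
  - intros p. rewrite !sum_n_Reals. unfold sp.
    rewrite (sum_sparse (fun j _ => a j)). reflexivity.
  - exact (filterlim_comp _ _ _ Nat.div2 (sum_n a) _ _ _ div2_lim H).
Qed.

Lemma ex_series_abs_sp a : ex_series (fun n => Rabs (a n)) -> ex_series (fun n => Rabs (sp a n)).
Proof.
  intros [l H]. exists l. apply is_series_ext with (sp (fun n => Rabs (a n))).
  - intros n; unfold sp; destruct (Nat.even n); [reflexivity| rewrite Rabs_R0; reflexivity].
  - now apply is_series_sp.
Qed.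

Definition conv2 (a b : nat -> R) (k : nat) : R :=
  sum_f_R0 (fun j => a j * b (k - 2 * j)%nat) (Nat.div2 k).

Lemma conv2_series a b la lb :
  is_series a la -> is_series b lb ->
  ex_series (fun n => Rabs (a n)) -> ex_series (fun n => Rabs (b n)) ->
  is_series (conv2 a b) (la * lb).
Proof.
  intros Ha Hb Aa Ab.
  pose proof (is_series_mult (sp a) b la lb (is_series_sp a la Ha) Hb (ex_series_abs_sp a Aa) Ab) as H.
  apply is_series_ext with (2 := H). intros k.
  unfold conv2.
  rewrite <- (sum_sparse (fun j i => a j * b (k - i)%nat)).
  apply sum_eq. intros i _. unfold sp. destruct (Nat.even i); ring.
Qed.

Lemma shift_series (u v : nat -> R) l :
  u 0%nat = 0 -> (forall m, u (S m) = v m) -> is_series v l -> is_series u l.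
Proof.
  intros H0 HS Hv. apply is_series_decr_1. rewrite H0.
  apply is_series_ext with v; [intros; symmetry; auto|].
  match goal with |- is_series _ ?L => replace L with l; [exact Hv|] end.
  unfold plus, opp; simpl; rewrite Ropp_0, Rplus_0_r; reflexivity.
Qed.

Lemma exp_series z : is_series (fun j => z ^ j / INR (Factorial.fact j)) (exp z).
Proof.
  pose proof (is_exp_Reals z) as H. unfold is_pseries in H.
  apply is_series_ext with (2 := H). intros j. rewrite pow_n_pow. reflexivity.
Qed.

Lemma is_series_scalR (c : R) (a : nat -> R) (l : R) :
  is_series a l -> is_series (fun n => c * a n) (c * l).
Proof. exact (is_series_scal c a l). Qed.
Lemma is_series_plusR (a b : nat -> R) (la lb : R) :
  is_series a la -> is_series b lb -> is_series (fun n => a n + b n) (la + lb).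
Proof. exact (is_series_plus a b la lb). Qed.

Definition aa (z : R) (j : nat) : R := z ^ j / INR (Factorial.fact j).
Definition bb (mu y : R) (m : nat) : R := y ^ m / gam mu m.

Lemma fact_pos j : 0 < INR (Factorial.fact j).
Proof. apply lt_0_INR, Factorial.lt_O_fact. Qed.

Lemma ex_bb_abs mu y : 0 <= mu -> ex_series (fun m => Rabs (bb mu y m)).
Proof.
  intros Hmu. apply (@ex_series_le R_AbsRing R_CompleteNormedModule) with (fun m => Rabs y ^ m / INR (Factorial.fact m)).
  - intros m. change (norm (Rabs (bb mu y m))) with (Rabs (Rabs (bb mu y m))).
    rewrite Rabs_Rabsolu. unfold bb. pose proof (gam_pos mu m Hmu). pose proof (gam_ge mu m Hmu).
    pose proof (fact_pos m).
    unfold Rdiv; rewrite Rabs_mult, Rabs_inv, <- RPow_abs, (Rabs_right (gam mu m)) by lra.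
    unfold Rdiv. apply Rmult_le_compat_l. apply pow_le, Rabs_pos.
    apply Rinv_le_contravar; lra.
  - eexists. apply exp_series.
Qed.

Lemma bb_series mu y : 0 <= mu -> is_series (bb mu y) (e_mu mu y).
Proof.
  intros Hmu. unfold e_mu. apply Series_correct. apply ex_series_Rabs, ex_bb_abs, Hmu.
Qed.

Lemma e_mu_ge1 mu y : 0 <= mu -> 0 <= y -> 1 <= e_mu mu y.
Proof.
  intros Hmu Hy. unfold e_mu. fold (bb mu y).
  rewrite Series_incr_1 by (apply ex_series_Rabs, ex_bb_abs, Hmu).
  assert (bb mu y 0 = 1) as -> by (unfold bb, gam; simpl; field).
  assert (0 <= Series (fun k => bb mu y (S k))); [|lra].
  replace 0 with (Series (fun k : nat => 0 * 0)).
  - apply Series_le.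
    + intros k. split; [lra|]. unfold bb. pose proof (gam_pos mu (S k) Hmu).
      rewrite Rmult_0_l. apply Rle_mult_inv_pos; auto. apply pow_le; auto.
    + apply (ex_series_incr_1 (bb mu y)). apply ex_series_Rabs, ex_bb_abs, Hmu.
  - rewrite Series_scal_l. ring.
Qed.

Definition B1 mu y m := y ^ m * cc mu m / gam mu m.
Definition B2 mu y m := y ^ m * cc mu m ^ 2 / gam mu m.

Lemma cc_S_pos mu m : 0 <= mu -> 0 < cc mu (S m).
Proof. intros H. pose proof (cc_ge mu (S m) H). pose proof (lt_0_INR (S m) ltac:(lia)). lra. Qed.

Lemma cc_0 mu : cc mu 0 = 0.
Proof. unfold cc, theta; simpl; ring. Qed.

Lemma B1_series mu y : 0 <= mu -> is_series (B1 mu y) (y * e_mu mu y).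
Proof.
  intros Hmu. apply shift_series with (fun m => y * bb mu y m).
  - unfold B1. rewrite cc_0. unfold Rdiv; ring.
  - intros m. unfold B1, bb. rewrite gam_S. pose proof (cc_S_pos mu m Hmu).
    pose proof (gam_pos mu m Hmu). simpl pow. field. lra.
  - exact (is_series_scal y _ _ (bb_series mu y Hmu)).
Qed.

Lemma B2_series mu y : 0 <= mu ->
  is_series (B2 mu y) (y * (y * e_mu mu y + e_mu mu y + 2 * mu * e_mu mu (- y))).
Proof.
  intros Hmu. apply shift_series with (fun m => y * (B1 mu y m + bb mu y m + 2 * mu * bb mu (-y) m)).
  - unfold B2. rewrite cc_0. unfold Rdiv; ring.
  - intros m. unfold B2, B1, bb. rewrite gam_S. pose proof (cc_S_pos mu m Hmu).
    pose proof (gam_pos mu m Hmu).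
    assert (Hc : cc mu (S m) = cc mu m + 1 + 2*mu*(1-2*theta m))
      by (unfold cc; rewrite S_INR, theta_S; ring).
    replace (y ^ S m * cc mu (S m) ^ 2 / (cc mu (S m) * gam mu m))
      with (y ^ S m * cc mu (S m) / gam mu m) by (field; split; lra).
    replace (- y) with (-1 * y) by ring. rewrite Rpow_mult_distr, neg1_pow.
    rewrite Hc. simpl pow. field. lra.
  - apply is_series_scalR.
    apply is_series_plusR; [apply is_series_plusR|].
    + apply B1_series, Hmu.
    + apply bb_series, Hmu.
    + apply is_series_scalR. apply bb_series, Hmu.
Qed.

Definition A1 z j := INR j * aa z j.
Definition A2 z j := INR j ^ 2 * aa z j.

Lemma aa_series z : is_series (aa z) (exp z).
Proof. apply exp_series. Qed.

Lemma A1_series z : is_series (A1 z) (z * exp z).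
Proof.
  apply shift_series with (fun m => z * aa z m).
  - unfold A1; simpl; ring.
  - intros m. unfold A1, aa. rewrite fact_simpl, mult_INR. pose proof (fact_pos m).
    pose proof (lt_0_INR (S m) ltac:(lia)). simpl pow. field. lra.
  - exact (is_series_scal z _ _ (aa_series z)).
Qed.

Lemma A2_series z : is_series (A2 z) (z * (z * exp z + exp z)).
Proof.
  apply shift_series with (fun m => z * (A1 z m + aa z m)).
  - unfold A2; simpl; ring.
  - intros m. unfold A2, A1, aa. rewrite fact_simpl, mult_INR. pose proof (fact_pos m).
    pose proof (lt_0_INR (S m) ltac:(lia)). rewrite S_INR in *. simpl pow. field. lra.
  - apply is_series_scalR. apply is_series_plusR; [apply A1_series|apply aa_series].
Qed.

Lemma abs_ex (a : nat -> R) l : (forall n, 0 <= a n) -> is_series a l -> ex_series (fun n => Rabs (a n)).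
Proof. intros H Hs. exists l. apply is_series_ext with (2 := Hs). intros n. rewrite Rabs_pos_eq; auto. Qed.

Lemma sum_mult_r (f : nat -> R) c N : sum_f_R0 f N * c = sum_f_R0 (fun i => f i * c) N.
Proof. induction N; simpl; [ring|]. rewrite <- IHN. ring. Qed.

Lemma summand_eq al mu N x (f : R -> R) k : 0 <= mu ->
  h_mu mu k N al / gam mu k * x ^ k * f ((INR k + 2 * mu * theta k) / N)
  = sum_f_R0 (fun j => aa (al * x ^ 2) j * bb mu (N * x) (k - 2 * j)
                       * f ((cc mu (k - 2 * j) + 2 * INR j) / N)) (Nat.div2 k).
Proof.
  intros Hmu. unfold h_mu. pose proof (gam_pos mu k Hmu).
  replace (gam mu k * sum_f_R0 (fun j => al ^ j * N ^ (k - 2 * j) /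
            (INR (Factorial.fact j) * gam mu (k - 2 * j))) (Nat.div2 k) / gam mu k)
    with (sum_f_R0 (fun j => al ^ j * N ^ (k - 2 * j) /
            (INR (Factorial.fact j) * gam mu (k - 2 * j))) (Nat.div2 k)) by (field; lra).
  rewrite Rmult_assoc, sum_mult_r. apply sum_eq. intros j Hj.
  assert (H2 : (2 * j <= k)%nat).
  { pose proof (Nat.div2_odd k). destruct (Nat.odd k); simpl in H0; lia. }
  assert (Ek : INR k + 2 * mu * theta k = cc mu (k - 2 * j) + 2 * INR j).
  { unfold cc. rewrite theta_sub by exact H2. rewrite minus_INR by exact H2.
    rewrite mult_INR. simpl (INR 2). ring. }
  rewrite Ek. unfold aa, bb.
  replace (x ^ k) with (x ^ (2 * j) * x ^ (k - 2 * j))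
    by (rewrite <- pow_add; f_equal; lia).
  rewrite !Rpow_mult_distr, pow_mult.
  pose proof (fact_pos j). pose proof (gam_pos mu (k - 2 * j) Hmu).
  field. split; lra.
Qed.

Lemma sum_lin3 (f g h : nat -> R) c1 c2 c3 M :
  sum_f_R0 (fun i => c1 * f i + c2 * g i + c3 * h i) M
  = c1 * sum_f_R0 f M + c2 * sum_f_R0 g M + c3 * sum_f_R0 h M.
Proof. induction M; simpl; [ring|]. rewrite IHM. ring. Qed.

Lemma conv3_series a1 b1 a2 b2 a3 b3 la1 lb1 la2 lb2 la3 lb3 c1 c2 c3 :
  (forall n, 0 <= a1 n) -> (forall n, 0 <= b1 n) ->
  (forall n, 0 <= a2 n) -> (forall n, 0 <= b2 n) ->
  (forall n, 0 <= a3 n) -> (forall n, 0 <= b3 n) ->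
  is_series a1 la1 -> is_series b1 lb1 ->
  is_series a2 la2 -> is_series b2 lb2 ->
  is_series a3 la3 -> is_series b3 lb3 ->
  is_series (fun k => c1 * conv2 a1 b1 k + c2 * conv2 a2 b2 k + c3 * conv2 a3 b3 k)
    (c1 * (la1 * lb1) + c2 * (la2 * lb2) + c3 * (la3 * lb3)).
Proof.
  intros P1 Q1 P2 Q2 P3 Q3 H1 K1 H2 K2 H3 K3.
  apply is_series_plusR; [apply is_series_plusR|]; apply is_series_scalR;
  apply conv2_series; auto; eapply abs_ex; eauto.
Qed.

Theorem lemma3 (al mu : R) (n : nat) (x : R) :
  0 <= al -> 0 <= mu -> (1 <= n)%nat -> 0 <= x ->
  T_op al mu n (fun _ => 1) x = 1 /\
  T_op al mu n (fun t => t) x = x + 2 * al * x ^ 2 / INR n /\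
  T_op al mu n (fun t => t ^ 2) x =
    x ^ 2 + 4 * al / INR n ^ 2 * x ^ 2 + 4 * al / INR n * x ^ 3
    + 4 * al ^ 2 / INR n ^ 2 * x ^ 4 + x / INR n
    + 2 * mu * x / INR n * (e_mu mu (- (INR n * x)) / e_mu mu (INR n * x)).
Proof.
  intros Hal Hmu Hn Hx.
  set (N := INR n). assert (HN : 0 < N) by (apply lt_0_INR; lia).
  set (y := N * x). set (z := al * x ^ 2).
  assert (Hy : 0 <= y) by (unfold y; nra).
  assert (Hz : 0 <= z) by (unfold z; pose proof (pow2_ge_0 x); nra).
  pose proof (e_mu_ge1 mu y Hmu Hy) as HE.
  pose proof (exp_pos z) as Hexp.
  assert (Paa : forall j, 0 <= aa z j).
  { intros j; unfold aa. pose proof (fact_pos j). apply Rle_mult_inv_pos; auto. apply pow_le; auto. }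
  assert (PA1 : forall j, 0 <= A1 z j).
  { intros j; unfold A1. apply Rmult_le_pos; auto. apply pos_INR. }
  assert (PA2 : forall j, 0 <= A2 z j).
  { intros j; unfold A2. apply Rmult_le_pos; auto. apply pow_le, pos_INR. }
  assert (Pbb : forall m, 0 <= bb mu y m).
  { intros m; unfold bb. pose proof (gam_pos mu m Hmu). apply Rle_mult_inv_pos; auto. apply pow_le; auto. }
  assert (PB1 : forall m, 0 <= B1 mu y m).
  { intros m; unfold B1. pose proof (gam_pos mu m Hmu). pose proof (cc_ge mu m Hmu). pose proof (pos_INR m).
    apply Rle_mult_inv_pos; auto. apply Rmult_le_pos; [apply pow_le|]; auto; lra. }
  assert (PB2 : forall m, 0 <= B2 mu y m).
  { intros m; unfold B2. pose proof (gam_pos mu m Hmu).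
    apply Rle_mult_inv_pos; auto. apply Rmult_le_pos; [apply pow_le; auto|]. apply pow2_ge_0. }
  pose proof (conv3_series _ _ _ _ _ _ _ _ _ _ _ _ 1 0 0 Paa Pbb Paa Pbb Paa Pbb
     (aa_series z) (bb_series mu y Hmu) (aa_series z) (bb_series mu y Hmu)
     (aa_series z) (bb_series mu y Hmu)) as S0.
  pose proof (conv3_series _ _ _ _ _ _ _ _ _ _ _ _ (/ N) (2 / N) 0 Paa PB1 PA1 Pbb Paa Pbb
     (aa_series z) (B1_series mu y Hmu) (A1_series z) (bb_series mu y Hmu)
     (aa_series z) (bb_series mu y Hmu)) as S1.
  pose proof (conv3_series _ _ _ _ _ _ _ _ _ _ _ _ (/ N ^ 2) (4 / N ^ 2) (4 / N ^ 2) Paa PB2 PA1 PB1 PA2 Pbb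
     (aa_series z) (B2_series mu y Hmu) (A1_series z) (B1_series mu y Hmu)
     (A2_series z) (bb_series mu y Hmu)) as S2.
  unfold T_op. fold N. fold y.
  replace (al * x ^ 2) with z by reflexivity.
  split; [|split].
  - erewrite is_series_unique.
    2:{ apply is_series_ext with (2 := S0). intros k.
        etransitivity; [|symmetry; apply (summand_eq al mu N x (fun _ => 1) k Hmu)].
        unfold conv2. rewrite <- sum_lin3. apply sum_eq. intros j _. fold z y. ring. }
    field. lra.
  - erewrite is_series_unique.
    2:{ apply is_series_ext with (2 := S1). intros k.
        etransitivity; [|symmetry; apply (summand_eq al mu N x (fun t => t) k Hmu)].
        unfold conv2. rewrite <- sum_lin3. apply sum_eq. intros j _. fold z y.
        unfold A1, B1, aa, bb. pose proof (fact_pos j). pose proof (gam_pos mu (k - 2 * j) Hmu).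
        field. repeat split; lra. }
    unfold y, z in *. field. lra.
  - erewrite is_series_unique.
    2:{ apply is_series_ext with (2 := S2). intros k.
        etransitivity; [|symmetry; apply (summand_eq al mu N x (fun t => t ^ 2) k Hmu)].
        unfold conv2. rewrite <- sum_lin3. apply sum_eq. intros j _. fold z y.
        unfold A1, A2, B1, B2, aa, bb. pose proof (fact_pos j). pose proof (gam_pos mu (k - 2 * j) Hmu).
        field. repeat split; lra. }
    unfold y, z in *. field. lra.
Qed.
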